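(* Let $d\ge 1$ be an integer and let $f\in C([-\tfrac12,\tfrac12]^d)$ satisfy $f(\mathbf{0})=0$, and suppose there is a constant $c>0$ such that $|f(x_1,\dots,x_d)|\ge c$ for every $\mathbf{x}=(x_1,\dots,x_d)\in[-\tfrac12,\tfrac12]^d$ having $x_j=\tfrac12$ for at least one index $1\le j\le d$. Then for any activation function $\sigma:\mathbb{R}\to\mathbb{R}$ and any fixed depth $L\ge1$, $\sigma$ networks with width less than $d$ and depth $L$ cannot approximate $f$ with arbitrary accuracy; that is, there exists $\epsilon>0$ such that no $\sigma$ network $\phi$ of depth $L$ and width $N<d$ satisfies $|f(\mathbf{x})-\phi(\mathbf{x})|<\epsilon$ for all $\mathbf{x}\in[-\tfrac12,\tfrac12]^d$.
   Context: For an activation function $\sigma:\mathbb{R}\to\mathbb{R}$, a $\sigma$ network with depth $L\in\mathbb{N}$ is a function $\phi:\mathbb{R}^d\to\mathbb{R}$ of the form $$\phi=\mathcal{L}_L\circ\sigma\circ\mathcal{L}_{L-1}\circ\sigma\circ\cdots\circ\sigma\circ\mathcal{L}_1\circ\sigma\circ\mathcal{L}_0,$$ where $\mathcal{L}_i(\mathbf{y})=\mathbf{W}_i\mathbf{y}+\mathbf{b}_i$ with $\mathbf{W}_i\in\mathbb{R}^{N_{i+1}\times N_i}$, $\mathbf{b}_i\in\mathbb{R}^{N_{i+1}}$, $N_0=d$, $N_{L+1}=1$, and $\sigma$ is applied componentwise to vectors. If $N_i=N$ for all $1\le i\le L$, the network is said to have width $N$. *)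

(* Defs.v *)
From HB Require Import structures.
From mathcomp Require Import all_boot all_order all_algebra.
From mathcomp Require Import all_classical all_reals all_analysis.
Unset Printing Implicit Defensive.
Import Order.TTheory GRing.Theory Num.Theory.
Import numFieldNormedType.Exports.
Local Open Scope ring_scope.
Local Open Scope classical_set_scope.

Section Nets.
Variable R : realType.

Definition cube (d : nat) : set 'cV[R]_d :=
  [set x | forall i : 'I_d, -(2^-1) <= x i 0 <= 2^-1].

Definition act (sigma : R -> R) (n : nat) (v : 'cV[R]_n) : 'cV[R]_n :=
  map_mx sigma v.

Fixpoint hidden (sigma : R -> R) (N : nat) (Ws : seq ('M[R]_N * 'cV[R]_N))
    (v : 'cV[R]_N) : 'cV[R]_N :=
  match Ws with
  | [::] => v
  | (W, b) :: t => hidden sigma N t (act sigma N (W *m v + b))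
  end.

(* phi : R^d -> R is a sigma network of depth L and width N:
   phi = L_L o sigma o L_{L-1} o ... o sigma o L_1 o sigma o L_0 *)
Definition is_sigma_network (sigma : R -> R) (d N L : nat)
    (phi : 'cV[R]_d -> R) : Prop :=
  exists (W0 : 'M[R]_(N, d)) (b0 : 'cV[R]_N)
         (Ws : seq ('M[R]_N * 'cV[R]_N)) (WL : 'M[R]_(1, N)) (bL : R),
    size Ws = L.-1 /\
    forall x : 'cV[R]_d,
      phi x = (WL *m hidden sigma N Ws (act sigma N (W0 *m x + b0))) 0 0 + bL.
End Nets.

(* Main.v *)
Require Import Defs.
From HB Require Import structures.
From mathcomp Require Import all_boot all_order all_algebra.
From mathcomp Require Import all_classical all_reals all_analysis.
Import Order.TTheory GRing.Theory Num.Theory.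
Import numFieldNormedType.Exports.
Local Open Scope ring_scope.
Local Open Scope classical_set_scope.

Lemma ker_nonzero (R : realType) (N d : nat) (W : 'M[R]_(N, d)) :
  (N < d)%N -> exists v : 'cV[R]_d, W *m v = 0 /\ exists k, v k 0 != 0.
Proof.
move=> hNd.
set K := kermx W^T.
have hK : K != 0.
  apply/negP => /eqP K0.
  have := mxrank_ker W^T; rewrite -/K K0 mxrank0 => /esym/eqP.
  rewrite subn_eq0 => hle.
  have := rank_leq_col W^T => h2.
  have := leq_trans hle h2. by rewrite leqNgt hNd.
have [i hi] : exists i, row i K != 0.
  apply/existsP; apply: contraR hK => /existsPn H.
  apply/eqP/row_matrixP => i; rewrite row0; exact/eqP/negPn/H.
exists (row i K)^T; split.
  apply: trmx_inj; rewrite trmx_mul trmxK -row_mul mulmx_ker row0 trmx0 //.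
have [k hk] : exists k, row i K 0 k != 0.
  apply/existsP; apply: contraR hi => /existsPn H.
  apply/eqP/matrixP => a b; move: (H b); by rewrite [a]ord1 !mxE negbK => /eqP.
by exists k; rewrite mxE.
Qed.

Lemma ker_cube (R : realType) (N d : nat) (W : 'M[R]_(N, d)) :
  (N < d)%N -> exists w : 'cV[R]_d, W *m w = 0 /\ cube R d w /\
     exists j : 'I_d, w j 0 = 2^-1.
Proof.
move=> hNd; have [v [hv [k hk]]] := @ker_nonzero R N d W hNd.
pose j := [arg max_(i > k) `|v i 0|]%O.
have hj : forall i, `|v i 0| <= `|v j 0|.
  rewrite /j; case: arg_maxP => //= j0 _ H i; exact: H.
have vj0 : v j 0 != 0.
  by rewrite -normr_gt0 (lt_le_trans _ (hj k)) // normr_gt0.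
exists ((2 * v j 0)^-1 *: v); split; first by rewrite -scalemxAr hv scaler0.
split; last first.
  exists j; rewrite mxE invfM -mulrA mulVf // mulr1 //.
move=> i; rewrite mxE -ler_norml normrM normfV normrM ger0_norm //.
rewrite invfM -mulrA ler_pdivrMl // mulrC ler_pdivrMr ?normr_gt0 //.
by rewrite divff // mul1r.
Qed.

Theorem theorem3p2 (R : realType) (d : nat) (hd : (1 <= d)%N)
  (f : 'cV[R]_d -> R)
  (hcont : {within cube R d, continuous f})
  (hf0 : f 0 = 0)
  (c : R) (hc : 0 < c)
  (hbd : forall x : 'cV[R]_d, cube R d x ->
         (exists j : 'I_d, x j 0 = 2^-1) -> c <= `|f x|)
  (sigma : R -> R) (L : nat) (hL : (1 <= L)%N) :
  exists eps : R, 0 < eps /\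
    forall (N : nat), (N < d)%N ->
    forall phi : 'cV[R]_d -> R, is_sigma_network R sigma d N L phi ->
      ~ (forall x : 'cV[R]_d, cube R d x -> `|f x - phi x| < eps).
Proof.
exists (c / 2); split; first by rewrite divr_gt0.
move=> N hN phi [W0 [b0 [Ws [WL [bL [_ hphi]]]]]] happ.
have [w [hw [cw [j hj]]]] := @ker_cube R N d W0 hN.
have c0 : cube R d 0.
  by move=> i; rewrite mxE oppr_le0 invr_ge0 ler0n.
have e1 := happ 0 c0; have e2 := happ w cw.
have pw : phi w = phi 0 by rewrite !hphi hw mulmx0.
have := hbd w cw (ex_intro _ j hj).
rewrite hf0 sub0r normrN in e1; rewrite pw in e2.
have hlt : `|f w| < c.
  rewrite (_ : f w = (f w - phi 0) + phi 0); last by rewrite subrK.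
  apply: le_lt_trans (ler_normD _ _) _.
  by rewrite [c]splitr ltrD.
by rewrite leNgt hlt.
Qed.
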